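(* Let $X$ be a $G$-space and $\rho_X\colon X\to X/G$ the orbit map. Then $\mathrm{cat}(\rho_X)\le\mathrm{cat}^{G,\infty}(X)$.
   Context: All spaces are well-pointed CW complexes, $G$ a topological group acting cellularly; $x_0\in X$ is the base point. For a map $f\colon X\to Y$, $\mathrm{cat}(f)$ is the least $n\ge0$ such that $X$ has an open cover by $n+1$ sets on each of which $f$ is nullhomotopic. $PX$ is the path space; $\mathcal{P}_k(X)=\{(\gamma_1,\dots,\gamma_k)\in(PX)^k\mid G\gamma_i(1)=G\gamma_{i+1}(0),\ 1\le i\le k-1\}$; $P^k_*(X)=\{(\gamma_1,\dots,\gamma_k)\in\mathcal{P}_k(X)\mid\gamma_1(0)=x_0\}$ with fibration $q_k\colon P^k_*(X)\to X$, $q_k(\gamma_1,\dots,\gamma_k)=\gamma_k(1)$. $\mathrm{secat}(f)$ (reduced) is the least $n$ such that the base of $f$ has an open cover $U_0,\dots,U_n$ with homotopy sections of $f$ over each $U_i$. $\mathrm{cat}^{G,k}(X)=\mathrm{secat}(q_k)$ and $\mathrm{cat}^{G,\infty}(X)=\min_{k\ge1}\mathrm{cat}^{G,k}(X)$. *)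

(* Defs.v *)
From HB Require Import structures.
From mathcomp Require Import all_boot all_order all_algebra generic_quotient.
From mathcomp Require Import all_classical all_reals topology normedtype.
Import numFieldNormedType.Exports.
Set Implicit Arguments. Unset Strict Implicit. Unset Printing Implicit Defensive.
Import Order.TTheory GRing.Theory Num.Theory.
Local Open Scope classical_set_scope.
Local Open Scope ring_scope.
Local Open Scope quotient_scope.

Record TopGroupAction (X : topologicalType) := {
  tg_carrier :> topologicalType;
  tg_mul : tg_carrier -> tg_carrier -> tg_carrier;
  tg_inv : tg_carrier -> tg_carrier;
  tg_one : tg_carrier;
  tg_mulA : forall a b c, tg_mul a (tg_mul b c) = tg_mul (tg_mul a b) c;
  tg_mul1g : forall a, tg_mul tg_one a = a;
  tg_mulVg : forall a, tg_mul (tg_inv a) a = tg_one;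
  tg_mul_cont : continuous (fun p : tg_carrier * tg_carrier => tg_mul p.1 p.2);
  tg_inv_cont : continuous tg_inv;
  tg_act : tg_carrier -> X -> X;
  tg_act_cont : continuous (fun p : tg_carrier * X => tg_act p.1 p.2);
  tg_act1 : forall x, tg_act tg_one x = x;
  tg_actM : forall a b x, tg_act (tg_mul a b) x = tg_act a (tg_act b x)
}.

Section Orbits.
Variables (X : topologicalType) (A : TopGroupAction X).

Definition same_orbit (x y : X) : Prop := exists g : A, tg_act g x = y.

Lemma tg_mulg1 (a : A) : tg_mul a (tg_one A) = a.
Proof.
have mulgV : forall b : A, tg_mul b (tg_inv b) = tg_one A.
  move=> b; rewrite -[in LHS](tg_mul1g (tg_mul b (tg_inv b))).
  rewrite -(tg_mulVg (tg_inv b)) -tg_mulA (tg_mulA (tg_inv b)) (tg_mulA (tg_inv (tg_inv b))).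
  by rewrite !tg_mulVg -tg_mulA tg_mul1g tg_mulVg.
by rewrite -(tg_mulVg a) tg_mulA mulgV tg_mul1g.
Qed.

Definition orbit_relb (x y : X) : bool := `[< same_orbit x y >].

Lemma orbit_relb_refl : reflexive orbit_relb.
Proof. by move=> x; apply/asboolP; exists (tg_one A); rewrite tg_act1. Qed.

Lemma orbit_relb_sym : symmetric orbit_relb.
Proof.
have h : forall x y, orbit_relb x y -> orbit_relb y x.
  move=> x y /asboolP [g <-]; apply/asboolP; exists (tg_inv g).
  by rewrite -tg_actM tg_mulVg tg_act1.
by move=> x y; apply/idP/idP => /h.
Qed.

Lemma orbit_relb_trans : transitive orbit_relb.
Proof.
move=> y x z /asboolP [g <-] /asboolP [h <-]; apply/asboolP.
by exists (tg_mul h g); rewrite tg_actM.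
Qed.

Definition orbit_equiv : equiv_rel X :=
  EquivRel orbit_relb orbit_relb_refl orbit_relb_sym orbit_relb_trans.

Definition orbit_space := quotient_topology {eq_quot orbit_equiv}.
Definition orbit_map : X -> orbit_space := \pi_orbit_space.
End Orbits.

Section Homotopy.
Variable R : realType.

Definition homotopic_on {X Y : topologicalType} (U : set X) (f g : X -> Y) : Prop :=
  exists H : X * R -> Y,
    {within (U `*` `[0%R, 1%R] : set (X * R)), continuous H} /\
    (forall x, U x -> H (x, 0%R) = f x /\ H (x, 1%R) = g x).

Definition nullhomotopic_on {X Y : topologicalType} (U : set X) (f : X -> Y) : Prop :=
  exists y : Y, homotopic_on U f (cst y).

Definition cat_le {X Y : topologicalType} (f : X -> Y) (n : nat) : Prop :=
  exists U : 'I_n.+1 -> set X,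
    (forall i, open (U i)) /\ \bigcup_i U i = setT /\
    (forall i, nullhomotopic_on (U i) f).

(* secat(p) <= n for p : E -> B, where the total space E is a subspace of T. *)
Definition secat_le {T B : topologicalType} (E : set T) (p : T -> B) (n : nat) : Prop :=
  exists U : 'I_n.+1 -> set B,
    (forall i, open (U i)) /\ \bigcup_i U i = setT /\
    (forall i, exists s : B -> T,
        {within U i, continuous s} /\ (forall b, U i b -> E (s b)) /\
        homotopic_on (U i) (p \o s) idfun).

Definition I01 : Type := set_type (`[0%R, 1%R]%classic : set R).

Lemma zero_in01 : (0%R : R) \in (`[0%R, 1%R]%classic : set R).
Proof. by apply/mem_set => /=; rewrite in_itv /= lexx ler01. Qed.
Lemma one_in01 : (1%R : R) \in (`[0%R, 1%R]%classic : set R).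
Proof. by apply/mem_set => /=; rewrite in_itv /= lexx ler01. Qed.
Definition t0 : I01 := exist _ 0%R zero_in01.
Definition t1 : I01 := exist _ 1%R one_in01.

(** Free path space PX = C(I, X) with the compact-open topology
    (as the subspace of continuous maps of {compact-open, I -> X}). *)
Definition PathSp (X : topologicalType) := {compact-open, I01 -> X}.

(** (PX)^k with the product topology; we index by k = m.+1 (k >= 1). *)
Definition PathTuple (X : topologicalType) (m : nat) :=
  {ptws 'I_m.+1 -> PathSp X}.

Section Pk.
Variables (X : topologicalType) (A : TopGroupAction X) (x0 : X) (m : nat).

Definition Pk_star : set (PathTuple X m) :=
  [set gam | (forall i, continuous (gam i : I01 -> X)) /\
     (forall i j : 'I_m.+1, val j = (val i).+1 ->
        same_orbit A ((gam i : I01 -> X) t1) ((gam j : I01 -> X) t0)) /\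
     (gam ord0 : I01 -> X) t0 = x0].

Definition qk (gam : PathTuple X m) : X := (gam ord_max : I01 -> X) t1.
End Pk.

Definition catG_le (X : topologicalType) (A : TopGroupAction X) (x0 : X)
    (m n : nat) : Prop :=
  secat_le (@Pk_star X A x0 m) (@qk X m) n.

Definition catGinf_le (X : topologicalType) (A : TopGroupAction X) (x0 : X)
    (n : nat) : Prop :=
  exists m : nat, catG_le A x0 m n.
End Homotopy.

(* Main.v *)
Require Import Defs.
From HB Require Import structures.
From mathcomp Require Import all_boot all_order all_algebra generic_quotient.
From mathcomp Require Import all_classical all_reals topology normedtype.
From mathcomp Require Import lra.
Import numFieldNormedType.Exports.
Set Implicit Arguments. Unset Strict Implicit. Unset Printing Implicit Defensive.
Import Order.TTheory GRing.Theory Num.Theory.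
Local Open Scope classical_set_scope.
Local Open Scope ring_scope.
Lemma within_comp_inner {T Y S : topologicalType} (A : set S) (B : set T)
  (F : S -> Y) (phi : T -> S) :
  {within A, continuous F} -> continuous phi ->
  (forall b, B b -> A (phi b)) -> {within B, continuous (F \o phi)}.
Proof.
move=> /subspace_continuousP cF cphi BA; apply/subspace_continuousP => x Bx.
apply: cvg_trans (cF _ (BA _ Bx)).
move=> P /=; rewrite !nbhs_simpl /= /within => /cphi; rewrite nbhs_simpl.
move=> h; rewrite /mkset /prop_near1.
have {}h : nbhs x (fun y => A (phi y) -> P (F (phi y))) by exact: h.
by apply: filterS h => y /= + By; apply; exact: BA.
Qed.

Lemma within_pair {T Y Z : topologicalType} (A : set T) (f : T -> Y) (g : T -> Z) :
  {within A, continuous f} -> {within A, continuous g} ->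
  {within A, continuous (fun z => (f z, g z))}.
Proof. by move=> cf cg x; apply: cvg_pair; [exact: cf|exact: cg]. Qed.

Lemma within_eq {T Y : topologicalType} (A : set T) (f g : T -> Y) :
  {in A, f =1 g} -> {within A, continuous f} -> {within A, continuous g}.
Proof. by move=> e; apply: subspace_eq_continuous. Qed.

Lemma paste_rel {T Y : topologicalType} (S C1 C2 : set T) (f : T -> Y) :
  closed C1 -> closed C2 -> S `<=` C1 `|` C2 ->
  {within S `&` C1, continuous f} -> {within S `&` C2, continuous f} ->
  {within S, continuous f}.
Proof.
move=> c1 c2 SC ctsA ctsB; apply/continuous_closedP => W oW.
case/continuous_closedP/(_ _ oW)/closed_subspaceP: ctsA => V1 cV1 V1W.
case/continuous_closedP/(_ _ oW)/closed_subspaceP: ctsB => V2 cV2 V2W.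
apply/closed_subspaceP; exists ((V1 `&` C1) `|` (V2 `&` C2)).
  by apply: closedU; exact: closedI.
rewrite eqEsubset; split=> t.
  case=> [[[a b]|[a b]] St]; split => //.
  - by have : (V1 `&` (S `&` C1)) t by []; rewrite V1W => -[].
  - by have : (V2 `&` (S `&` C2)) t by []; rewrite V2W => -[].
move=> [ft St]; split => //; case: (SC _ St) => Ct; [left|right]; split => //.
- by have : ((f @^-1` W) `&` (S `&` C1)) t by []; rewrite -V1W => -[].
- by have : ((f @^-1` W) `&` (S `&` C2)) t by []; rewrite -V2W => -[].
Qed.
Section Clamp.
Variable R : realType.
Definition clamp01 (r : R) : R := Order.min 1 (Order.max 0 r).
Lemma clamp01_in r : clamp01 r \in (`[0%R, 1%R]%classic : set R).
Proof.
apply/mem_set => /=; rewrite in_itv /= /clamp01.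
apply/andP; split; first by rewrite le_min ler01 le_max lexx.
by rewrite ge_min lexx.
Qed.
Definition c01 (r : R) : I01 R := exist _ (clamp01 r) (clamp01_in r).
Lemma clamp01_cont : continuous clamp01.
Proof.
move=> x; apply: (@continuous_min R R (cst 1) (fun r => Order.max 0 r)); first exact: cvg_cst.
apply: (@continuous_max R R (cst 0) id); [exact: cvg_cst|exact: cvg_id].
Qed.
Lemma c01_cont : continuous c01.
Proof. by apply: (@continuous_comp_initial _ _ _ (@set_val R _)); exact: clamp01_cont. Qed.
End Clamp.

Section Eval.
Variable R : realType.
Lemma clamp01_id (r : R) : 0 <= r <= 1 -> clamp01 r = r.
Proof.
move=> /andP[r0 r1]; rewrite /clamp01.
by rewrite (@Order.POrderTheory.max_r _ _ 0 r) // (@Order.POrderTheory.min_r _ _ 1 r).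
Qed.
Lemma clamp01_lip (r s : R) : 0 <= s <= 1 -> `|clamp01 r - s| <= `|r - s|.
Proof.
move=> /andP[s0 s1]; rewrite /clamp01.
case: (leP 0 r) => r0; case: (leP 1 r) => r1 /=.
- rewrite !ger0_norm ?subr_ge0 //; last exact: le_trans r1.
  by rewrite lerB.
- by [].
- rewrite (@Order.POrderTheory.min_r _ _ 1 0) ?ler01 // sub0r normrN ger0_norm //.
  rewrite ler0_norm ?opprB ?subr_le0; last exact: (le_trans (ltW r0)).
  lra.
- rewrite (@Order.POrderTheory.min_r _ _ 1 0) ?ler01 // sub0r normrN ger0_norm //.
  rewrite ler0_norm ?opprB ?subr_le0; last exact: (le_trans (ltW r0)).
  lra.
Qed.

Lemma ballI01 (t y : I01 R) e : ball t e y = ball (val t) e (val y).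
Proof. by rewrite -(@initial_ballE R _ _ (@set_val R _)). Qed.

Lemma eval_at (X : topologicalType) (f : PathSp R X) (t : I01 R) :
  continuous (f : I01 R -> X) ->
  {for (f, t), continuous (fun p : PathSp R X * I01 R => (p.1 : I01 R -> X) p.2)}.
Proof.
move=> cf P /=; rewrite nbhsE => -[O [oO Oft]] /filterS; apply.
have : nbhs t ((f : I01 R -> X) @^-1` O) by apply: cf; exact: open_nbhs_nbhs.
move=> /nbhs_ballP[e /= e0 beO].
set K := @c01 R @` `[val t - e / 2, val t + e / 2].
have cK : compact K.
  apply: continuous_compact; last exact: segment_compact.
  exact/continuous_subspaceT/(@c01_cont R).
have vt01 : 0 <= val t <= 1 by have := set_valP t; rewrite /= in_itv.
have KO : (f : I01 R -> X) @` K `<=` O.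
  move=> _ [_ [r /= rI <-] <-]; apply: beO; rewrite ballI01 /= -ball_normE /ball_ /=.
  rewrite distrC (le_lt_trans (clamp01_lip _ vt01)) //.
  move: rI; rewrite in_itv /= => /andP[r1 r2].
  rewrite ltr_norml; apply/andP; split; lra.
have Kt : nbhs t K.
  apply/nbhs_ballP; exists (e / 2) => /=; first by rewrite divr_gt0.
  move=> y; rewrite ballI01 /= -ball_normE /ball_ /= => hy.
  have vy01 : 0 <= val y <= 1 by have := set_valP y; rewrite /= in_itv.
  exists (val y).
    move: hy; rewrite ltr_norml /= in_itv /= => /andP[h1 h2]; apply/andP; split; lra.
  by apply: val_inj; rewrite /= clamp01_id.
exists ([set g : PathSp R X | (g : I01 R -> X) @` K `<=` O], K) => /=.
  split => //; apply: open_nbhs_nbhs; split => //; exact: compact_open_open.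
by case=> g s /= [gKO Ks]; apply: gKO; exists s.
Qed.


End Eval.

Lemma fst_cont {T U : topologicalType} : continuous (@fst T U).
Proof. by move=> [a b]; exact: cvg_fst. Qed.
Lemma snd_cont {T U : topologicalType} : continuous (@snd T U).
Proof. by move=> [a b]; exact: cvg_snd. Qed.

Lemma pair_map_cont {A B C D : topologicalType} (u : A -> C) (v : B -> D) :
  continuous u -> continuous v -> continuous (fun p : A * B => (u p.1, v p.2)).
Proof.
move=> cu cv z.
have h1 : u z0.1 @[z0 --> z] --> u z.1.
  by apply: (@continuous_comp _ _ _ fst u); [exact: fst_cont|exact: cu].
have h2 : v z0.2 @[z0 --> z] --> v z.2.
  by apply: (@continuous_comp _ _ _ snd v); [exact: snd_cont|exact: cv].
exact: (cvg_pair h1 h2).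
Qed.

Lemma rho_eq (X : topologicalType) (A : TopGroupAction X) (a b : X) :
  same_orbit A a b -> orbit_map A a = orbit_map A b.
Proof.
by move=> h; rewrite /orbit_map; apply/eqquotP; apply/asboolP.
Qed.

Section Main.
Variables (R : realType) (X : topologicalType) (A : TopGroupAction X) (x0 : X) (m : nat).
Variables (U : set X) (s : X -> PathTuple R X m) (H : X * R -> X).
Hypothesis cs : {within U, continuous s}.
Hypothesis sP : forall b, U b -> @Pk_star R X A x0 m (s b).
Hypothesis cH : {within (U `*` `[0%R, 1%R] : set (X * R)), continuous H}.
Hypothesis H01 : forall x, U x -> H (x, 0%R) = @qk R X m (s x) /\ H (x, 1%R) = x.

Let rho := orbit_map A.
Let Y := orbit_space A.

Definition gam (x : X) (i : 'I_m.+1) : I01 R -> X := (s x i : PathSp R X).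

Definition piece (j : nat) (z : X * R) : Y :=
  if j is j'.+1 then rho (gam z.1 (inord (m - j')) (c01 (j'.+2%:R - z.2)))
  else rho (H (z.1, 1 - z.2)).

Lemma piece_cont j (a b : R) : 
  (j = 0%N -> a = 0 /\ b = 1) ->
  {within (U `*` `[a, b] : set (X * R)), continuous (piece j)}.
Proof.
case: j => [/(_ erefl) [-> ->]|j _] /=.
  apply: (@within_continuous_comp _ _ _ _ _ rho).
    by move=> ? _; exact: pi_continuous.
  suff h : {within (U `*` `[0, 1] : set (X * R)), continuous (H \o (fun z : X * R => (z.1, 1 - z.2)))} by exact: h.
  apply: (within_comp_inner cH).
    move=> z; have h1 : z0.1 @[z0 --> z] --> z.1 by exact: fst_cont.
    have h2 : (1 - z0.2) @[z0 --> z] --> 1 - z.2 by apply: cvgB; [exact: cvg_cst|exact: snd_cont].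
    exact: (cvg_pair h1 h2).
  move=> [x t] /= [Ux]; rewrite !in_itv /= => /andP[? ?]; split => //; apply/andP; split; lra.
set i : 'I_m.+1 := inord (m - j).
pose f := fun z : X * R => (s z.1, @c01 R (j.+2%:R - z.2)).
pose g := fun p : PathTuple R X m * I01 R => rho ((p.1 i : PathSp R X) p.2).
suff h : {within (U `*` `[a, b] : set (X * R)), continuous (g \o f)} by exact: h.
apply: within_continuous_comp.
  move=> p; rewrite inE => -[[x t] [/= Ux _] <-].
  have cpi : continuous (fun q : PathTuple R X m => (q i : PathSp R X)) := @proj_continuous _ (fun _ => PathSp R X) i.
  have cp := pair_map_cont cpi (fun z : I01 R => @cvg_id _ (nbhs z)).
  have -> : g = rho \o ((fun q : PathSp R X * I01 R => (q.1 : I01 R -> X) q.2) \o (fun p : PathTuple R X m * I01 R => ((p.1 i : PathSp R X), id p.2))) by [].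
  apply: continuous_comp; last exact: pi_continuous.
  apply: continuous_comp; first exact: cp.
  by apply: eval_at; case: (sP Ux) => + _; apply.
apply: within_pair.
  apply: (@within_comp_inner _ _ _ U _ s fst cs fst_cont).
  by move=> [x t] [].
apply: continuous_subspaceT => z.
apply: (@continuous_comp _ _ _ (fun z : X * R => j.+2%:R - z.2) (@c01 R)); last exact: c01_cont.
by apply: cvgB; [exact: cvg_cst|exact: snd_cont].
Qed.

Fixpoint F (J : nat) (z : X * R) : Y :=
  if J is J'.+1 then (if z.2 <= J%:R then F J' z else piece J z) else piece 0 z.

Lemma F_end J x : F J (x, J.+1%:R) = piece J (x, J.+1%:R).
Proof. by case: J => //= J; rewrite ifF //; apply/negbTE; rewrite -ltNge ltr_nat. Qed.

Lemma F_zero J x : F J (x, 0) = piece 0 (x, 0).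
Proof. by elim: J => //= J ->; rewrite ler0n. Qed.

Lemma t1E : @c01 R 1 = t1 R.
Proof. by apply: val_inj; rewrite /= clamp01_id // ler01 lexx. Qed.
Lemma t0E : @c01 R 0 = t0 R.
Proof. by apply: val_inj; rewrite /= clamp01_id // ler01 lexx. Qed.

Lemma boundary J x : U x -> (J <= m)%N ->
  piece J (x, J.+1%:R) = piece J.+1 (x, J.+1%:R).
Proof.
move=> Ux Jm; have [cg [adj g0]] := sP Ux.
case: J Jm => [|j] Jm /=.
  rewrite subrr (proj1 (H01 Ux)) /qk subn0.
  have -> : (2%:R - 1 : R) = 1 by rewrite [2%:R]mulrS addrK.
  rewrite t1E /gam; congr (rho ((s x _ : PathSp R X) _)).
  by apply: val_inj; rewrite /= inordK.
rewrite subrr [j.+3%:R]mulrS addrK t0E t1E; symmetry; apply: rho_eq.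
apply: adj; rewrite /= !inordK ?ltnS ?leq_subr //.
by rewrite subnSK.
Qed.

Lemma closed_le (a : R) : closed [set z : X * R | z.2 <= a].
Proof.
have -> : [set z : X * R | z.2 <= a] = snd @^-1` `]-oo, a] .
  by apply/seteqP; split => z /=; rewrite in_itv.
by move: (@lray_closed _ R a); apply: (proj1 (continuous_closedP _)); exact: snd_cont.
Qed.
Lemma closed_ge (a : R) : closed [set z : X * R | a <= z.2].
Proof.
have -> : [set z : X * R | a <= z.2] = snd @^-1` `[a, +oo[ .
  by apply/seteqP; split => z /=; rewrite in_itv /= andbT.
by move: (@rray_closed _ R a); apply: (proj1 (continuous_closedP _)); exact: snd_cont.
Qed.

Lemma Fcont J : (J <= m.+1)%N ->
  {within (U `*` `[0, J.+1%:R] : set (X * R)), continuous (F J)}.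
Proof.
elim: J => [_|J IH JS].
  by apply: piece_cont.
apply: (@paste_rel _ _ (U `*` `[0, J.+2%:R] : set (X * R)) _ _ (F J.+1) (@closed_le J.+1%:R) (@closed_ge J.+1%:R)).
  by move=> z _; rewrite /=; case: (leP z.2 J.+1%:R) => h; [left|right; exact: ltW].
have -> : (U `*` `[0, J.+2%:R] `&` [set z : X * R | z.2 <= J.+1%:R])
          = (U `*` `[0, J.+1%:R] : set (X * R)).
  apply/seteqP; split => -[x t] /=; rewrite !in_itv /=.
    by move=> [[Ux /andP[t0 _]] tJ]; split => //; apply/andP.
  move=> [Ux /andP[t0 tJ]]; split => //; split => //; apply/andP; split => //.
  by apply: (le_trans tJ); rewrite ler_nat.
  apply: (within_eq _ (IH (ltnW JS))).
  by move=> [x t]; rewrite inE /= in_itv /= => -[_ /andP[_ ->]].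
have -> : (U `*` `[0, J.+2%:R] `&` [set z : X * R | J.+1%:R <= z.2])
          = (U `*` `[J.+1%:R, J.+2%:R] : set (X * R)).
  apply/seteqP; split => -[x t] /=; rewrite !in_itv /=.
    by move=> [[Ux /andP[t0 t1]] tJ]; split => //; apply/andP.
  move=> [Ux /andP[tJ t2]]; split => //; split => //; apply/andP; split => //.
  by apply: le_trans tJ.
have pc : {within (U `*` `[J.+1%:R, J.+2%:R] : set (X * R)), continuous (piece J.+1)} by apply: piece_cont.
apply: (within_eq _ pc).
move=> [x t]; rewrite inE /= in_itv /= => -[Ux /andP[tJ _]].
case: ifPn => // tJ'.
have -> : t = J.+1%:R by apply/eqP; rewrite eq_le tJ tJ'.
by rewrite F_end boundary.
Qed.

Lemma final : homotopic_on R U rho (cst (rho x0)).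
Proof.
exists (fun z : X * R => F m.+1 (z.1, m.+2%:R * z.2)); split.
  suff h : {within (U `*` `[0, 1] : set (X * R)),
     continuous (F m.+1 \o (fun z : X * R => (z.1, m.+2%:R * z.2)))} by exact: h.
  apply: (within_comp_inner (Fcont (leqnn _))).
    apply: (@pair_map_cont _ _ _ _ id (fun r : R => m.+2%:R * r)); first exact: (fun z => @cvg_id _ (nbhs z)).
    by move=> r; apply: cvgMr; exact: cvg_id.
  move=> [x t] /= [Ux]; rewrite !in_itv /= => /andP[t0 t1]; split => //.
  have N0 : (0 : R) <= m.+2%:R by rewrite ler0n.
  apply/andP; split; nra.
move=> x Ux; split.
  have -> : F m.+1 (x, m.+2%:R * 0) = piece 0 (x, 0) by rewrite mulr0 F_zero.
  by rewrite /= subr0 (proj2 (H01 Ux)).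
have -> : F m.+1 (x, m.+2%:R * 1) = piece m.+1 (x, m.+2%:R) by rewrite mulr1 F_end.
rewrite /= subrr t0E subnn.
have [_ [_ g0]] := sP Ux; rewrite /gam -g0.
by congr (rho ((s x _ : PathSp R X) _)); apply: val_inj; rewrite /= inordK.
Qed.
End Main.

Theorem mainTheorem5 (R : realType) (X : topologicalType)
    (A : TopGroupAction X) (x0 : X) (n : nat) :
  catGinf_le R A x0 n -> cat_le R (orbit_map A) n.
Proof.
move=> [m [U [oU [cov hs]]]]; exists U; split => //; split => // i.
have [s [cs [sP [H [cH H01]]]]] := hs i.
exists (orbit_map A x0).
exact: (@final R X A x0 m (U i) s H cs sP cH H01).
Qed.
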